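(* Let $(\mathfrak{g},[-,-],(-,-))$ be a metric real Lie algebra and $(V,\langle-,-\rangle)$ a faithful real orthogonal representation of $\mathfrak{g}$, and let $T:V\times V\to\mathfrak{g}$ be defined by $(T(u,v),x)=\langle x\cdot u,v\rangle$. Then the 3-bracket $[u,v,w]=T(u,v)\cdot w$ on $V$ defines a real metric 3-Leibniz algebra with the symmetric inner product $\langle-,-\rangle$.
   Context: All vector spaces are finite-dimensional and real. A metric real Lie algebra has a nondegenerate symmetric ad-invariant bilinear form $(-,-)$ (any signature). A real orthogonal representation is a Lie algebra homomorphism $\mathfrak{g}\to\mathfrak{so}(V)$ with respect to a nondegenerate symmetric form $\langle-,-\rangle$; faithful means injective. A real metric 3-Leibniz algebra is a vector space with nondegenerate symmetric $\langle-,-\rangle$ and trilinear $[-,-,-]$ satisfying: fundamental identity $[x,y,[z,s,t]]=[[x,y,z],s,t]+[z,[x,y,s],t]+[z,s,[x,y,t]]$; unitarity $\langle[x,y,z],s\rangle+\langle z,[x,y,s]\rangle=0$; symmetry $\langle[x,y,z],s\rangle=\langle[z,s,x],y\rangle$. *)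

(* Defs.v *)
From HB Require Import structures.
From mathcomp Require Import all_boot all_order all_algebra.
From mathcomp Require Import reals.
Set Implicit Arguments. Unset Strict Implicit. Unset Printing Implicit Defensive.
Import Order.TTheory GRing.Theory Num.Theory.
Local Open Scope ring_scope.

Section Defs.
Variable R : realType.

Definition bilinear_map (U W : lmodType R) (f : U -> U -> W) : Prop :=
  (forall a x y z, f (a *: x + y) z = a *: f x z + f y z) /\
  (forall a x y z, f z (a *: x + y) = a *: f z x + f z y).

Definition trilinear_map (U : lmodType R) (f : U -> U -> U -> U) : Prop :=
  (forall a x y z s, f (a *: x + y) z s = a *: f x z s + f y z s) /\
  (forall a x y z s, f z (a *: x + y) s = a *: f z x s + f z y s) /\
  (forall a x y z s, f z s (a *: x + y) = a *: f z s x + f z s y).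

Definition nondeg_sym_form (U : lmodType R) (b : U -> U -> R) : Prop :=
  [/\ (forall a x y z, b (a *: x + y) z = a * b x z + b y z),
      (forall x y, b x y = b y x)
    & (forall x, (forall y, b x y = 0) -> x = 0)].

Definition lie_algebra (g : lmodType R) (br : g -> g -> g) : Prop :=
  [/\ bilinear_map br,
      (forall x, br x x = 0)
    & (forall x y z, br x (br y z) + br y (br z x) + br z (br x y) = 0)].

Definition metric_lie_algebra (g : lmodType R) (br : g -> g -> g)
    (B : g -> g -> R) : Prop :=
  [/\ lie_algebra br, nondeg_sym_form B
    & (forall x y z, B (br x y) z + B y (br x z) = 0)].

(* orthogonal representation rho : g -> so(V, ip), x . v = rho x v *)
Definition orthogonal_rep (g V : lmodType R) (br : g -> g -> g)
    (ip : V -> V -> R) (rho : g -> V -> V) : Prop :=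
  [/\ nondeg_sym_form ip,
      (forall a x y v, rho (a *: x + y) v = a *: rho x v + rho y v),
      (forall x a u v, rho x (a *: u + v) = a *: rho x u + rho x v),
      (forall x y v, rho (br x y) v = rho x (rho y v) - rho y (rho x v))
    & (forall x u v, ip (rho x u) v + ip u (rho x v) = 0)].

Definition metric_3Leibniz (V : lmodType R) (ip : V -> V -> R)
    (br3 : V -> V -> V -> V) : Prop :=
  [/\ nondeg_sym_form ip,
      trilinear_map br3,
      (forall x y z s t, br3 x y (br3 z s t) =
          br3 (br3 x y z) s t + br3 z (br3 x y s) t + br3 z s (br3 x y t)),
      (forall x y z s, ip (br3 x y z) s + ip z (br3 x y s) = 0)
    & (forall x y z s, ip (br3 x y z) s = ip (br3 z s x) y)].

End Defs.

(* Main.v *)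
Require Import Defs.
From HB Require Import structures.
From mathcomp Require Import all_boot all_order all_algebra.
From mathcomp Require Import reals.
Import GRing.Theory.
Local Open Scope ring_scope.

Section H.
Variable R : realType.
Variable U : lmodType R.
Variable b : U -> U -> R.
Hypothesis hb : nondeg_sym_form b.

Lemma bD x y z : b (x + y) z = b x z + b y z.
Proof. case: hb => L _ _; by rewrite -{1}(scale1r x) L mul1r. Qed.
Lemma bZ a x z : b (a *: x) z = a * b x z.
Proof. case: hb => L _ _.
have := L a x 0 z; rewrite addr0 => ->.
have h0 : b 0 z = 0.
  have := L 1 0 0 z; rewrite scaler0 addr0 mul1r.
  by move/(congr1 (fun t => t - b 0 z)); rewrite addrK subrr => ->.
by rewrite h0 addr0. Qed.
Lemma bB x y z : b (x - y) z = b x z - b y z.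
Proof. by rewrite bD -scaleN1r bZ mulN1r. Qed.
Lemma bDr x y z : b z (x + y) = b z x + b z y.
Proof. case: hb => _ S _; by rewrite S bD (S x) (S y). Qed.
Lemma bZr a x z : b z (a *: x) = a * b z x.
Proof. case: hb => _ S _; by rewrite S bZ S. Qed.
Lemma bext p q : (forall y, b p y = b q y) -> p = q.
Proof. case: hb => _ _ N h; apply/eqP; rewrite -subr_eq0; apply/eqP; apply: N => y.
by rewrite bB h subrr. Qed.
End H.

Theorem mainTheorem15 (R : realType) (g V : vectType R)
    (br : g -> g -> g) (B : g -> g -> R)
    (ip : V -> V -> R) (rho : g -> V -> V) (T : V -> V -> g) :
  metric_lie_algebra br B ->
  orthogonal_rep br ip rho ->
  injective rho ->
  (forall u v x, B (T u v) x = ip (rho x u) v) ->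
  metric_3Leibniz ip (fun u v w => rho (T u v) w).
Proof.
case=> _ hB inv [hip rL rR rbr orth] _ hT.
have rL' : forall x y v, rho (x + y) v = rho x v + rho y v.
  by move=> x y v; rewrite -{1}(scale1r x) rL scale1r.
have TL : forall a x y z, T (a *: x + y) z = a *: T x z + T y z.
  move=> a x y z; apply: (@bext R g B hB) => w.
  by rewrite hT bD // bZ // !hT rR bD // bZ.
have TR : forall a x y z, T z (a *: x + y) = a *: T z x + T z y.
  move=> a x y z; apply: (@bext R g B hB) => w.
  by rewrite hT bD // bZ // !hT bDr // bZr.
have key : forall X z s, br X (T z s) = T (rho X z) s + T z (rho X s).
  move=> X z s; apply: (@bext R g B hB) => y.
  have := inv X (T z s) y => /eqP; rewrite addr_eq0 => /eqP ->.
  rewrite (@bD _ _ _ hB) !hT rbr (@bB _ _ _ hip).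
  have := orth X (rho y z) s => /eqP; rewrite addr_eq0 => /eqP ->.
  by rewrite opprB opprK.
split => //.
- split; last split.
  + by move=> a x y z s /=; rewrite TL rL.
  + by move=> a x y z s /=; rewrite TR rL.
  + by move=> a x y z s /=; rewrite rR.
- move=> x y z s t /=.
  rewrite -!rL' -key.
  have := rbr (T x y) (T z s) t => /eqP; rewrite eq_sym subr_eq => /eqP ->.
  by rewrite addrC.
- move=> x y z s /=. case: hB => _ S _.
  by rewrite -hT S hT.
Qed.
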